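(* Let $G$ be an $n$-vertex graph of density $p$, and let $\mathcal Q,\mathcal P$ be partitions of $V(G)$ with $\mathcal Q$ refining $\mathcal P$. If $\mathcal D(\mathcal Q,\mathcal P)\ge xpn^2$ (for some $x\ge 0$), then $\mathcal H(\mathcal Q)-\mathcal H(\mathcal P)\ge 2x^2p$.
   Context: The density of $G=(V,E)$ is $2|E|/|V|^2$. $e(X,Y)$ is the number of ordered pairs $(u,v)\in X\times Y$ with $uv\in E(G)$ and $d(X,Y)=e(X,Y)/(|X||Y|)$. $H(x)=x\ln x$, $H(0)=0$. For a partition $\mathcal P$ of $V(G)$, $\mathcal H(\mathcal P)=\sum_{V,V'\in\mathcal P}\frac{|V||V'|}{n^2}H(d(V,V'))$, summed over ordered pairs. For $\mathcal P=\{V_1,\dots,V_k\}$ and a refinement $\mathcal Q$, $\mathcal Q|_{V_i}$ denotes the partition of $V_i$ induced by $\mathcal Q$, and $$\mathcal D(\mathcal Q,\mathcal P)=\frac12\sum_{i,j=1}^k\ \sum_{U\in\mathcal Q|_{V_i},\,U'\in\mathcal Q|_{V_j}}|U||U'|\,|d(U,U')-d(V_i,V_j)|.$$ *)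

(* Defs.v *)
From HB Require Import structures.
From mathcomp Require Import all_boot all_order all_algebra.
From mathcomp Require Import reals exp.
Set Implicit Arguments. Unset Strict Implicit. Unset Printing Implicit Defensive.
Import Order.TTheory GRing.Theory Num.Theory.
Local Open Scope ring_scope.

Section Defs.
Variables (R : realType) (V : finType) (adj : rel V).

Definition edges_between (X Y : {set V}) : nat :=
  #|[set uv : V * V | [&& uv.1 \in X, uv.2 \in Y & adj uv.1 uv.2]]|.

Definition pair_density (X Y : {set V}) : R :=
  (edges_between X Y)%:R / (#|X| * #|Y|)%:R.

(* density of G: 2|E|/|V|^2 = e(V,V)/|V|^2 for a simple graph *)
Definition graph_density : R :=
  (edges_between [set: V] [set: V])%:R / (#|V| ^ 2)%:R.

Definition Hfun (x : R) : R := if x == 0 then 0 else x * ln x.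

Definition calH (P : {set {set V}}) : R :=
  \sum_(A in P) \sum_(B in P)
     ((#|A| * #|B|)%:R / (#|V| ^ 2)%:R) * Hfun (pair_density A B).

Definition refines (Q P : {set {set V}}) : Prop :=
  forall U, U \in Q -> exists2 A, A \in P & U \subset A.

Definition calD (Q P : {set {set V}}) : R :=
  2^-1 * \sum_(A in P) \sum_(B in P)
     \sum_(U in Q | U \subset A) \sum_(U' in Q | U' \subset B)
       (#|U| * #|U'|)%:R * `|pair_density U U' - pair_density A B|.

End Defs.

(* Main.v *)
Require Import Defs.
From HB Require Import structures.
From mathcomp Require Import all_boot all_order all_algebra.
From mathcomp Require Import reals exp.
From mathcomp Require boolp classical_sets functions topology normedtype derive realfun.
From mathcomp Require Import ring lra.
Import Order.TTheory GRing.Theory Num.Theory.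
Local Open Scope ring_scope.

Module An.
Import boolp classical_sets functions topology normedtype derive realfun.
Import numFieldNormedType.Exports.
Section An.
Variable R : realType.

Lemma mono_helper (f df : R -> R) (a b : R) : 0 < a -> a <= b ->
  (forall x : R, 0 < x -> is_derive x 1 f (df x)) ->
  (forall x : R, a < x < b -> 0 <= df x) -> f a <= f b.
Proof.
move=> a0 ab hd hpos.
have hd' : forall x, a <= x -> is_derive x 1 f (df x).
  by move=> x ax; apply: hd; exact: lt_le_trans ax.
apply: (@ger0_derive1_ndecr R f a b) => //.
- move=> x; rewrite in_itv /= => /andP[ax _]; have := hd' x (ltW ax).
  by move=> H; exact: ex_derive.
- move=> x; rewrite in_itv /= => /andP[ax xb].
  have H := hd' x (ltW ax); rewrite derive1E derive_val; apply: hpos.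
  by rewrite ax xb.
- apply: derivable_within_continuous => x; rewrite in_itv /= => /andP[ax _].
  have H := hd' x ax; exact: ex_derive.
Qed.

Lemma ln_ge1 (x : R) : 0 < x -> 1 - x^-1 <= ln x.
Proof.
move=> x0.
have h := @le_ln1Dx R (x^-1 - 1).
have : -1 < x^-1 - 1 by have := invr_gt0 x; rewrite x0; lra.
move=> /h; rewrite addrC subrK lnV ?posrE //; lra.
Qed.

Definition kf (s : R) := (s + 1) * ln s - 2 * (s - 1).

Lemma kf_der (x : R) : 0 < x -> is_derive x 1 kf (ln x + x^-1 - 1).
Proof.
move=> x0.
have dln := @is_derive1_ln R x x0.
have -> : kf = (@id R + cst 1) * (@ln R) - (cst 2) * (@id R - cst 1).
  by apply/funext => s; rewrite /kf.
apply: is_derive_eq.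
rewrite /= -![_ *: _]/(_ * _).
have -> : (id + cst 1) x = x + 1 :> R by [].
have -> : (id - cst 1) x = x - 1 :> R by [].
have -> : cst 2 x = 2 :> R by [].
rewrite mulrDl divff ?gt_eqF // mul1r; lra.
Qed.


Lemma kf1 : kf 1 = 0.
Proof. by rewrite /kf ln1 mulr0 subrr mulr0 subrr. Qed.

Lemma kf_sign (s : R) : 0 < s -> 0 <= (s - 1) * kf s.
Proof.
move=> s0; case: (lerP 1 s) => hs.
- have : kf 1 <= kf s.
    apply: (@mono_helper kf (fun x => ln x + x^-1 - 1)) => //.
      by move=> x x0; exact: kf_der.
    move=> x /andP[x1 _]; have := @ln_ge1 x (lt_trans ltr01 x1); lra.
  rewrite kf1 => h; apply: mulr_ge0 => //; lra.
- have : kf s <= kf 1.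
    apply: (@mono_helper kf (fun x => ln x + x^-1 - 1)) => //.
    + exact: ltW.
    + by move=> x x0; exact: kf_der.
    move=> x /andP[x1 _]; have := @ln_ge1 x (lt_trans s0 x1); lra.
  rewrite kf1 => h; apply: mulr_le0 => //; lra.
Qed.

Definition Gf (s : R) := 2 * (s + 2) * (s * ln s - s + 1) - 3 * ((s - 1) * (s - 1)).

Lemma Gf_der (x : R) : 0 < x -> is_derive x 1 Gf (4 * kf x).
Proof.
move=> x0.
have dln := @is_derive1_ln R x x0.
have -> : Gf = (cst 2 * (@id R + cst 2)) * (@id R * (@ln R) - @id R + cst 1)
   - cst 3 * ((@id R - cst 1) * (@id R - cst 1)).
  by apply/funext => s; rewrite /Gf.
apply: is_derive_eq.
rewrite /= -![_ *: _]/(_ * _).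
have -> : (id + cst 2) x = x + 2 :> R by [].
have -> : (id - cst 1) x = x - 1 :> R by [].
have -> : (id * ln (R:=R) - id + cst 1) x = x * ln x - x + 1 :> R by [].
have -> : ((id - cst 1) * (id - cst 1)) x = (x - 1) * (x - 1) :> R by [].
have -> : cst 2 x = 2 :> R by [].
have -> : cst 3 x = 3 :> R by [].
have -> : (cst 2 * (id + cst 2)) x = 2 * (x + 2) :> R by [].

rewrite divff ?gt_eqF // /kf; ring.
Qed.

Lemma Gf1 : Gf 1 = 0.
Proof. rewrite /Gf ln1; ring. Qed.

Lemma Gf_ge0 (s : R) : 0 < s -> 0 <= Gf s.
Proof.
move=> s0; case: (lerP 1 s) => hs.
- have : Gf 1 <= Gf s.
    apply: (@mono_helper Gf (fun x => 4 * kf x)) => //.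
      by move=> x x0; exact: Gf_der.
    move=> x /andP[x1 _]; have := @kf_sign x (lt_trans ltr01 x1).
    rewrite pmulr_rge0 ?subr_gt0 // => h; lra.
  by rewrite Gf1.
- have : - Gf s <= - Gf 1.
    apply: (@mono_helper (fun x => - Gf x) (fun x => - (4 * kf x))) => //.
    + exact: ltW.
    + move=> x x0; have := @Gf_der x x0 => H.
      have -> : (fun x => - Gf x) = - Gf by [].
      exact: is_deriveN.
    move=> x /andP[sx x1]; have := @kf_sign x (lt_trans s0 sx).
    rewrite nmulr_rge0 ?subr_lt0 // => h; lra.
  rewrite Gf1; lra.
Qed.

Lemma phi_bound (y d : R) : 0 <= y -> 0 < d ->
  3 * (y - d) ^+ 2 <= 2 * (y + 2 * d) * (y * ln y - d * ln d - (ln d + 1) * (y - d)).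
Proof.
move=> y0 d0; case: (ltrgt0P y) y0 => // [yp|->] _; last first.
  rewrite ln0 // !mulr0; nra.
set s := y / d.
have s0 : 0 < s by apply: divr_gt0.
have e : y = s * d by rewrite /s divfK ?gt_eqF.
have hl : ln y = ln s + ln d by rewrite e lnM ?posrE.
have := @Gf_ge0 _ s0; rewrite /Gf hl e => H.
have H2 := mulr_ge0 (mulr_ge0 (ltW d0) (ltW d0)) H.
nra.
Qed.


Lemma HfunE (x : R) : Hfun x = x * ln x.
Proof. by rewrite /Hfun; case: eqP => [->|]; rewrite ?mul0r. Qed.

Lemma term_bound (y dd lam : R) : 0 <= y -> 0 <= dd -> (dd = 0 -> y = 0) -> 0 <= lam ->
  0 <= Hfun y - Hfun dd - (ln dd + 1) * (y - dd) - lam * `|y - dd| + lam ^+ 2 / 6 * (y + 2 * dd).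
Proof.
move=> y0 d0 hd l0; rewrite !HfunE.
case: (ltrgt0P dd) d0 => // [dp|dz] _; last first.
  rewrite (hd dz) dz; rewrite !(subrr, mul0r, mulr0, normr0, addr0, subr0) ; lra.
have hb := @phi_bound y dd y0 dp.
have ha : (y - dd) ^+ 2 = `|y - dd| ^+ 2 by rewrite real_normK // num_real.
rewrite ha in hb.
have a0 : 0 <= `|y - dd| by [].
set a := `|y - dd| in hb a0 *.
set ph := (y * ln y - dd * ln dd - (ln dd + 1) * (y - dd)) in hb *.
have m0 : 0 < y + 2 * dd by lra.
have sq : 0 <= (3 * a - lam * (y + 2 * dd)) ^+ 2 by apply: sqr_ge0.
nra.
Qed.

End An.
End An.
Import An.

Section Comb.
Variables (R : realType) (V : finType) (adj : rel V).
Local Notation e := (edges_between adj).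
Local Notation d := (pair_density R adj).

Lemma edgesE (X Y : {set V}) :
  (e X Y)%:R = \sum_(u in X) \sum_(v in Y) (adj u v)%:R :> R.
Proof.
rewrite /edges_between -sum1_card natr_sum pair_big /=.
rewrite big_mkcond [RHS]big_mkcond; apply: eq_bigr => -[u v] _ /=.
rewrite inE /=; case: (u \in X); case: (v \in Y); case: (adj u v) => //.
Qed.

Lemma sum_part (PP : {set {set V}}) (X : {set V}) (G : V -> R) :
  partition PP X -> \sum_(u in X) G u = \sum_(U in PP) \sum_(u in U) G u.
Proof.
by move=> /and3P[/eqP cov triv _]; rewrite -cov big_trivIset.
Qed.

Lemma edges_partl (PP : {set {set V}}) (X Y : {set V}) :
  partition PP X -> (e X Y)%:R = \sum_(U in PP) (e U Y)%:R :> R.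
Proof.
move=> hp; rewrite edgesE (sum_part _ _ _ hp); apply: eq_bigr => U _.
by rewrite edgesE.
Qed.

Lemma edges_partr (PP : {set {set V}}) (X Y : {set V}) :
  partition PP Y -> (e X Y)%:R = \sum_(U in PP) (e X U)%:R :> R.
Proof.
move=> hp; rewrite edgesE.
rewrite (eq_bigr (fun u => \sum_(U in PP) \sum_(v in U) (adj u v)%:R)); last first.
  by move=> u _; rewrite (sum_part _ _ _ hp).
rewrite exchange_big; apply: eq_bigr => U _; by rewrite edgesE.
Qed.

Arguments edges_partl [PP X] Y.
Arguments edges_partr [PP] X [Y].

Lemma card_part (PP : {set {set V}}) (X : {set V}) :
  partition PP X -> (#|X|)%:R = \sum_(U in PP) (#|U|)%:R :> R.
Proof. by move=> hp; rewrite (card_partition hp) natr_sum. Qed.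
Arguments card_part [PP X].

Lemma edges_sub (U U' A B : {set V}) : U \subset A -> U' \subset B ->
  (e U U' <= e A B)%N.
Proof.
move=> UA UB; apply: subset_leq_card; apply/subsetP => -[u v]; rewrite !inE /=.
case/and3P => uU vU' ->; rewrite andbT (subsetP UA _ uU) (subsetP UB _ vU') //.
Qed.

Lemma part_mem (PP : {set {set V}}) (X U : {set V}) :
  partition PP X -> U \in PP -> U \subset X /\ U != set0.
Proof.
move=> /and3P[/eqP cov _ n0] UP; split.
  by rewrite -cov; apply: bigcup_sup.
by apply: contraNneq n0 => <-.
Qed.
Arguments part_mem [PP X U].

Lemma part_restrict (Q P : {set {set V}}) (A : {set V}) :
  partition P [set: V] -> partition Q [set: V] -> refines Q P -> A \in P ->
  partition [set U in Q | U \subset A] A.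
Proof.
move=> hP hQ hQP AP.
have /and3P[/eqP covP trivP _] := hP.
have /and3P[/eqP covQ trivQ n0Q] := hQ.
apply/and3P; split.
- apply/eqP/setP => x; apply/bigcupP/idP.
    by case=> U; rewrite inE => /andP[_ UA] xU; exact: (subsetP UA).
  move=> xA.
  have xc : x \in cover Q by rewrite covQ inE.
  have UQ := pblock_mem xc.
  have xU : x \in pblock Q x by rewrite mem_pblock.
  have [A0 A0P UA0] := hQP _ UQ.
  have xA0 := subsetP UA0 _ xU.
  have -> : A = A0 by rewrite -(def_pblock trivP AP xA) (def_pblock trivP A0P xA0).
  by exists (pblock Q x) => //; rewrite inE UQ.
- apply: trivIsetS trivQ; apply/subsetP => U; rewrite inE => /andP[].
  by [].
- by rewrite inE negb_and n0Q.
Qed.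

Lemma regroup (Q P : {set {set V}}) (F : {set V} -> R) :
  partition P [set: V] -> partition Q [set: V] -> refines Q P ->
  \sum_(U in Q) F U = \sum_(A in P) \sum_(U in Q | U \subset A) F U.
Proof.
move=> hP hQ hQP.
have /and3P[_ trivP _] := hP.
rewrite (exchange_big_dep (fun U => U \in Q)) /=; last by move=> A U _ /andP[].
apply: eq_bigr => U UQ.
have [A0 A0P UA0] := hQP U UQ.
have [_ Un0] := part_mem hQ UQ.
have [u uU] := set0Pn _ Un0.
rewrite (big_pred1 A0) // => A /=; rewrite UQ /=.
apply/andP/eqP => [[AP UA]|->]; last by [].
by rewrite -(def_pblock trivP AP (subsetP UA _ uU)) (def_pblock trivP A0P (subsetP UA0 _ uU)).
Qed.

Lemma dsum_lin4 (I J : finType) (a : pred I) (b : pred J) (f1 f2 f3 f4 : I -> J -> R)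
  (k1 k2 k3 k4 : R) :
  \sum_(i in a) \sum_(j in b) (k1 * f1 i j + k2 * f2 i j + k3 * f3 i j + k4 * f4 i j) =
  k1 * (\sum_(i in a) \sum_(j in b) f1 i j) + k2 * (\sum_(i in a) \sum_(j in b) f2 i j)
  + k3 * (\sum_(i in a) \sum_(j in b) f3 i j) + k4 * (\sum_(i in a) \sum_(j in b) f4 i j).
Proof.
rewrite !mulr_sumr -!big_split /=; apply: eq_bigr => i _.
by rewrite !mulr_sumr -!big_split.
Qed.

Lemma dsum_lin2 (I J : finType) (a : pred I) (b : pred J) (f1 f2 : I -> J -> R)
  (k1 k2 : R) :
  \sum_(i in a) \sum_(j in b) (k1 * f1 i j + k2 * f2 i j) =
  k1 * (\sum_(i in a) \sum_(j in b) f1 i j) + k2 * (\sum_(i in a) \sum_(j in b) f2 i j).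
Proof.
rewrite !mulr_sumr -!big_split /=; apply: eq_bigr => i _.
by rewrite !mulr_sumr -!big_split.
Qed.

Lemma block_bound (A B : {set V}) (PA PB : {set {set V}}) (lam N : R) :
  partition PA A -> partition PB B -> A != set0 -> B != set0 -> 0 <= lam -> 0 <= N ->
  N^-1 * (lam * (\sum_(U in PA) \sum_(U' in PB)
                  (#|U| * #|U'|)%:R * `|d U U' - d A B|) - lam ^+ 2 / 2 * (e A B)%:R)
  <= \sum_(U in PA) \sum_(U' in PB) ((#|U| * #|U'|)%:R / N) * Hfun (d U U')
     - ((#|A| * #|B|)%:R / N) * Hfun (d A B).
Proof.
move=> hA hB An0 Bn0 l0 N0.
set W := ((#|A| * #|B|)%:R : R); set dd := d A B; set c := ln dd + 1.
have cardpos : forall X : {set V}, X != set0 -> (0 < #|X|)%N.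
  by move=> X; rewrite card_gt0.
have hW : \sum_(U in PA) \sum_(U' in PB) ((#|U| * #|U'|)%:R : R) = W.
  rewrite /W natrM (card_part hA) (card_part hB) mulr_suml; apply: eq_bigr => U _.
  by rewrite mulr_sumr; apply: eq_bigr => U' _; rewrite natrM.
have he : \sum_(U in PA) \sum_(U' in PB) ((e U U')%:R : R) = (e A B)%:R.
  rewrite (edges_partl B hA); apply: eq_bigr => U _; by rewrite (edges_partr U hB).
have hwy : forall U U', U != set0 -> U' != set0 ->
    (#|U| * #|U'|)%:R * d U U' = (e U U')%:R :> R.
  move=> U U' h1 h2; rewrite /pair_density mulrC divfK //.
  by rewrite pnatr_eq0 -lt0n muln_gt0 !cardpos.
have hdW : dd * W = (e A B)%:R by rewrite /dd /W mulrC hwy.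
have H0 : 0 <= \sum_(U in PA) \sum_(U' in PB) ((#|U| * #|U'|)%:R *
     (Hfun (d U U') - Hfun dd - c * (d U U' - dd) - lam * `|d U U' - dd|
      + lam ^+ 2 / 6 * (d U U' + 2 * dd))).
  apply: sumr_ge0 => U UA; apply: sumr_ge0 => U' UB.
  have [sUA nU] := part_mem hA UA; have [sUB nU'] := part_mem hB UB.
  apply: mulr_ge0 => //; apply: term_bound => //.
  - by rewrite /pair_density divr_ge0.
  - by rewrite /dd /pair_density divr_ge0.
  - move=> dd0.
    have eAB0 : e A B = 0%N.
      by apply/eqP; rewrite -(eqr_nat R) -hdW dd0 mul0r.
    have := edges_sub _ _ _ _ sUA sUB; rewrite eAB0 leqn0 => /eqP h.
    by rewrite /pair_density h mul0r.
have E : forall U U' : {set V}, (#|U| * #|U'|)%:R *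
     (Hfun (d U U') - Hfun dd - c * (d U U' - dd) - lam * `|d U U' - dd|
      + lam ^+ 2 / 6 * (d U U' + 2 * dd)) =
   1 * ((#|U| * #|U'|)%:R * Hfun (d U U')) + (- Hfun dd + c * dd + lam ^+ 2 / 6 * (2 * dd)) * (#|U| * #|U'|)%:R
   + (- c + lam ^+ 2 / 6) * ((#|U| * #|U'|)%:R * d U U') + (- lam) * ((#|U| * #|U'|)%:R * `|d U U' - dd|) :> R.
  by move=> U U'; ring.
rewrite (eq_bigr _ (fun U _ => eq_bigr _ (fun U' _ => E U U'))) dsum_lin4 in H0.
have hwys : \sum_(U in PA) \sum_(U' in PB) ((#|U| * #|U'|)%:R * d U U') = (e A B)%:R.
  rewrite -he; apply: eq_bigr => U UA; apply: eq_bigr => U' UB.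
  by apply: hwy; [case: (part_mem hA UA) | case: (part_mem hB UB)].
rewrite hW hwys in H0.
set S1 := \sum_(U in PA) \sum_(U' in PB) ((#|U| * #|U'|)%:R * Hfun (d U U')) in H0.
set Sa := \sum_(U in PA) \sum_(U' in PB) ((#|U| * #|U'|)%:R * `|d U U' - dd|) in H0 *.
have -> : \sum_(U in PA) \sum_(U' in PB) ((#|U| * #|U'|)%:R / N) * Hfun (d U U')
     - (W / N) * Hfun dd = N^-1 * (S1 - W * Hfun dd).
  rewrite mulrBr /S1 mulr_sumr; congr (_ - _); last by ring.
  apply: eq_bigr => U _; rewrite mulr_sumr; apply: eq_bigr => U' _; ring.
apply: ler_wpM2l; first by rewrite invr_ge0.
have key : (- Hfun dd + c * dd + lam ^+ 2 / 6 * (2 * dd)) * W + (- c + lam ^+ 2 / 6) * (e A B)%:R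
   = - (W * Hfun dd) + lam ^+ 2 / 2 * (e A B)%:R.
  by rewrite -hdW; field.
move: H0; rewrite -(addrA (1 * S1)) key mul1r mulNr.
set t1 := lam * Sa; set t2 := lam ^+ 2 / 2 * (e A B)%:R; set t3 := W * Hfun dd.
lra.
Qed.

End Comb.
Arguments part_restrict [V Q P A].
Arguments regroup [R V Q P] F.
Arguments edges_partl [R V] adj [PP X] Y.
Arguments edges_partr [R V] adj [PP] X [Y].
Arguments part_mem [V PP X U].

Lemma eq_le_sub (R : realType) (a b : R) : a <= b -> 0 <= b - a.
Proof. by rewrite subr_ge0. Qed.

Theorem lemma3p6 (R : realType) (V : finType) (adj : rel V)
  (adj_sym : symmetric adj) (adj_irr : irreflexive adj)
  (Q P : {set {set V}})
  (hP : partition P [set: V]) (hQ : partition Q [set: V])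
  (hQP : refines Q P) (x : R) (hx : 0 <= x) :
  calD R adj Q P >= x * graph_density R adj * (#|V| ^ 2)%:R ->
  calH R adj Q - calH R adj P >= 2 * x ^+ 2 * graph_density R adj.
Proof.
move=> hD.
set N : R := (#|V| ^ 2)%:R.
set lam : R := 2 * x.
have N0 : 0 <= N by [].
have l0 : 0 <= lam by rewrite /lam mulr_ge0.
have hPA : forall A, A \in P -> partition [set U in Q | U \subset A] A.
  by move=> A AP; exact: (part_restrict hP hQ hQP AP).
have sE : forall (A : {set V}) (F : {set V} -> R),
    \sum_(U in [set U in Q | U \subset A]) F U = \sum_(U in Q | U \subset A) F U.
  by move=> A F; apply: eq_bigl => U; rewrite inE.
have sE2 : forall (A B : {set V}) (G : {set V} -> {set V} -> R),
    \sum_(U in [set U in Q | U \subset A]) \sum_(U' in [set U in Q | U \subset B]) G U U'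
    = \sum_(U in Q | U \subset A) \sum_(U' in Q | U' \subset B) G U U'.
  by move=> A B G; rewrite sE; apply: eq_bigr => U _; rewrite sE.
set f := fun U U' : {set V} => ((#|U| * #|U'|)%:R / N) * Hfun (pair_density R adj U U').
have HQ : calH R adj Q = \sum_(A in P) \sum_(B in P)
    \sum_(U in Q | U \subset A) \sum_(U' in Q | U' \subset B) f U U'.
  rewrite /calH -/N (regroup (fun U => \sum_(U' in Q) f U U') hP hQ hQP).
  apply: eq_bigr => A _.
  rewrite (eq_bigr (fun U => \sum_(B in P) \sum_(U' in Q | U' \subset B) f U U')); last first.
    by move=> U _; rewrite (regroup (fun U' => f U U') hP hQ hQP).
  by rewrite exchange_big.
set T := fun A B : {set V} => \sum_(U in Q | U \subset A) \sum_(U' in Q | U' \subset B)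
    (#|U| * #|U'|)%:R * `|pair_density R adj U U' - pair_density R adj A B|.
set E := fun A B : {set V} => ((edges_between adj A B)%:R : R).
have Hlow : \sum_(A in P) \sum_(B in P) (N^-1 * lam * T A B + (- (N^-1 * (lam ^+ 2 / 2))) * E A B)
    <= calH R adj Q - calH R adj P.
  rewrite HQ /calH -/N -sumrB; apply: ler_sum => A AP; rewrite -sumrB; apply: ler_sum => B BP.
  have := @block_bound R V adj _ _ _ _ lam N (hPA A AP) (hPA B BP) (proj2 (part_mem hP AP)) (proj2 (part_mem hP BP)) l0 N0.
  move=> h; rewrite !sE2 in h; apply: le_trans h; rewrite /T /E; rewrite le_eqVlt; apply/orP; left; apply/eqP; ring.
rewrite dsum_lin2 in Hlow.
have HE : \sum_(A in P) \sum_(B in P) E A B = (edges_between adj [set: V] [set: V])%:R.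
  rewrite /E (edges_partl adj [set: V] hP); apply: eq_bigr => A _.
  by rewrite (edges_partr adj A hP).
have HT : \sum_(A in P) \sum_(B in P) T A B = 2 * calD R adj Q P.
  rewrite /calD /T mulrA mulfV ?mul1r //; apply/eqP => h2; lra.
rewrite HE HT in Hlow.
move: hD Hlow; rewrite /graph_density -/N.
set eV := ((edges_between adj [set: V] [set: V])%:R : R).
set cD := calD R adj Q P.
have [Nz|Npos] := eqVneq N 0.
  rewrite Nz invr0 => _ h.
  by move: h; rewrite !(mulr0, mul0r, oppr0, addr0).
have Np : 0 < N by rewrite lt0r Npos N0.
set k := N^-1.
have k0 : 0 < k by rewrite invr_gt0.
rewrite -mulrA divfK // => hD' Hlow.
have hh := mulr_ge0 (mulr_ge0 hx (ltW k0)) (@eq_le_sub _ _ _ hD').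
rewrite /lam in Hlow.
nra.
Qed.
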